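(* Let $\mathcal D=V(\mathcal I)$ where $\mathcal I$ is a finite tuple-independent probabilistic database and $V$ is a monotone view. Then $\mathcal D\in\mathsf{sjfCQ}(\mathsf{TI}_{\mathsf{fin}})$.
   Context: Fix a countably infinite universe $U$. A database schema is a finite nonempty set of relation symbols with arities; facts are $R(u_1,\dots,u_{\mathrm{ar}(R)})$ with $u_i\in U$; an instance is a finite set of facts; $\mathrm{adom}(D)$ is the set of elements of $U$ occurring in $D$. A probabilistic database (PDB) is a discrete probability space $(\mathbb D,P)$ with $\mathbb D$ a nonempty countable set of instances; it is finite if $\mathbb D$ is finite. A PDB $\mathcal I$ is tuple-independent if for all pairwise distinct facts $f_1,\dots,f_k$, $\Pr(f_1\in I,\dots,f_k\in I)=\prod_i\Pr(f_i\in I)$; $\mathsf{TI}_{\mathsf{fin}}$ is the class of finite tuple-independent PDBs. A view is a function from instances of an input schema to instances of an output schema; it is monotone if $D\subseteq D'$ implies $V(D)\subseteq V(D')$. The image of a PDB $(\mathbb D,P)$ under $V$ is the PDB on $V(\mathbb D)$ with $P'(\{D'\})=P(\{D:V(D)=D'\})$. A self-join free conjunctive query is a first-order formula built from relational atoms $R(\bar u)$ ($\bar u$ variables or constants) and equality atoms using only $\exists$ and $\wedge$, in which each relation symbol occurs at most once; it is evaluated under active domain semantics. An sjfCQ-view consists of one such formula $\Phi_R(x_1,\dots,x_{\mathrm{ar}(R)})$ per output relation $R$, mapping $D$ to the instance of all $R(\bar a)$ with $\bar a$ over $\mathrm{adom}(D)\cup\mathrm{adom}(\Phi_R)$ and $D\models\Phi_R[\bar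 a]$. $\mathsf{sjfCQ}(\mathsf{TI}_{\mathsf{fin}})$ is the class of images of finite TI-PDBs under sjfCQ-views. *)

(* Defs.v *)
From HB Require Import structures.
From mathcomp Require Import all_boot all_order all_algebra.
From mathcomp Require Import finmap.
From mathcomp Require Import reals.

Set Implicit Arguments.
Unset Strict Implicit.
Unset Printing Implicit Defensive.

Import Order.TTheory GRing.Theory Num.Theory.
Local Open Scope fset_scope.
Local Open Scope ring_scope.

Notation U := nat (only parsing).

Record schema := Schema {
  rel :> finType;
  ar : rel -> nat;
  rel_nonempty : (0 < #|{: rel}|)%N }.

Definition fact (S : schema) : choiceType :=
  {R : S & (ar R).-tuple U}.
Definition inst (S : schema) : choiceType := {fset fact S}.

Definition adom (S : schema) (D : inst S) (u : U) : Prop :=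
  exists2 f : fact S, f \in D & u \in tagged f.

Record fpdb (R : realType) (X : choiceType) := FPDB {
  worlds : {fset X};
  mass : X -> R }.

Definition valid_fpdb (R : realType) (X : choiceType) (P : fpdb R X) : Prop :=
  (0 < #|` worlds P|)%N /\
  (forall x, x \in worlds P -> 0 <= mass P x) /\
  \sum_(x <- worlds P) mass P x = 1.

Definition prE (R : realType) (X : choiceType) (P : fpdb R X) (E : pred X) : R :=
  \sum_(x <- worlds P | E x) mass P x.

Definition pr (R : realType) (X : choiceType) (P : fpdb R X) (x : X) : R :=
  prE P (pred1 x).

Definition same_pdb (R : realType) (X : choiceType) (P Q : fpdb R X) : Prop :=
  forall x, pr P x = pr Q x.

(** Tuple-independence: for pairwise distinct facts f_1..f_k (i.e. a finite
    set F of facts), Pr(f_1 \in I, ..., f_k \in I) = prod_i Pr(f_i \in I). *)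
Definition tuple_independent (R : realType) (S : schema) (P : fpdb R (inst S))
  : Prop :=
  forall F : {fset fact S},
    prE P (fun D : inst S => F `<=` D) =
    \prod_(f <- F) prE P (fun D : inst S => f \in D).

Definition TI_fin (R : realType) (S : schema) (P : fpdb R (inst S)) : Prop :=
  valid_fpdb P /\ tuple_independent P.

Definition monotone_view (S T : schema) (V : inst S -> inst T) : Prop :=
  forall D D' : inst S, D `<=` D' -> V D `<=` V D'.

Definition image_pdb (R : realType) (X Y : choiceType) (V : X -> Y)
  (P : fpdb R X) : fpdb R Y :=
  {| worlds := [fset V x | x in worlds P];
     mass := fun y => prE P (fun x => V x == y) |}.

Inductive term := TVar of nat | TConst of U.

Inductive cq (S : schema) :=
  | CAtom (R : S) (ts : (ar R).-tuple term)
  | CEq (t1 t2 : term)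
  | CAnd (phi psi : cq S)
  | CEx (x : nat) (phi : cq S).

Arguments CEq {S}.

Definition term_vars (t : term) : seq nat :=
  match t with TVar x => [:: x] | TConst _ => [::] end.
Definition term_consts (t : term) : seq U :=
  match t with TVar _ => [::] | TConst c => [:: c] end.

Fixpoint fv (S : schema) (phi : cq S) : seq nat :=
  match phi with
  | CAtom _ ts => flatten (map term_vars ts)
  | CEq t1 t2 => term_vars t1 ++ term_vars t2
  | CAnd phi psi => fv phi ++ fv psi
  | CEx x phi => filter (predC1 x) (fv phi)
  end.

Fixpoint consts (S : schema) (phi : cq S) : seq U :=
  match phi with
  | CAtom _ ts => flatten (map term_consts ts)
  | CEq t1 t2 => term_consts t1 ++ term_consts t2
  | CAnd phi psi => consts phi ++ consts psi
  | CEx _ phi => consts phi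
  end.

Fixpoint rels (S : schema) (phi : cq S) : seq S :=
  match phi with
  | CAtom R _ => [:: R]
  | CEq _ _ => [::]
  | CAnd phi psi => rels phi ++ rels psi
  | CEx _ phi => rels phi
  end.

Definition self_join_free (S : schema) (phi : cq S) : bool := uniq (rels phi).

Definition eval_term (nu : nat -> U) (t : term) : U :=
  match t with TVar x => nu x | TConst c => c end.

Definition upd (nu : nat -> U) (x : nat) (a : U) : nat -> U :=
  fun y => if y == x then a else nu y.

Fixpoint sat (S : schema) (D : inst S) (dom : U -> Prop) (nu : nat -> U)
  (phi : cq S) : Prop :=
  match phi with
  | CAtom R ts =>
      (Tagged (fun R : S => (ar R).-tuple U) (map_tuple (eval_term nu) ts)
        : fact S) \in D
  | CEq t1 t2 => eval_term nu t1 = eval_term nu t2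
  | CAnd phi psi => sat D dom nu phi /\ sat D dom nu psi
  | CEx x phi => exists2 a, dom a & sat D dom (upd nu x a) phi
  end.

Definition adom_sem (S : schema) (D : inst S) (Phi : cq S) (u : U) : Prop :=
  adom D u \/ u \in consts Phi.

(** The assignment x_i |-> a_i (variables x_1..x_n are TVar 0..TVar n-1). *)
Definition tuple_asg (n : nat) (a : n.-tuple U) : nat -> U :=
  fun i => nth 0%N a i.

Definition sjfcq_formula (S : schema) (n : nat) (Phi : cq S) : Prop :=
  self_join_free Phi /\ (forall x, x \in fv Phi -> (x < n)%N).

Definition sjfCQ_view (S T : schema) (V : inst S -> inst T) : Prop :=
  exists Phi : T -> cq S,
    (forall R : T, sjfcq_formula (ar R) (Phi R)) /\
    forall (D : inst S) (f : fact T),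
      f \in V D <->
      ((forall u, u \in tagged f -> adom_sem D (Phi (tag f)) u) /\
       sat D (adom_sem D (Phi (tag f))) (tuple_asg (tagged f)) (Phi (tag f))).

Definition in_sjfCQ_TIfin (R : realType) (T : schema) (P : fpdb R (inst T))
  : Prop :=
  exists (S : schema) (I : fpdb R (inst S)) (V : inst S -> inst T),
    TI_fin I /\ sjfCQ_view V /\ same_pdb (image_pdb V I) P.

(* Main.v *)
Require Import Defs.
From HB Require Import structures.
From mathcomp Require Import all_boot all_order all_algebra finmap reals.
From mathcomp Require Import boolp.
Set Implicit Arguments.
Unset Strict Implicit.
Unset Printing Implicit Defensive.
Import Order.TTheory GRing.Theory Num.Theory.
Local Open Scope fset_scope.
Local Open Scope ring_scope.

Definition mkf (S : schema) (r : S) (s : seq nat) : fact S :=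
  Tagged (fun r : S => (ar r).-tuple nat) (insubd (nseq_tuple (ar r) 0%N) s).

Lemma mkf_val (S : schema) (r : S) (s : seq nat) :
  size s = ar r -> val (tagged (mkf r s)) = s.
Proof. by move=> hs; rewrite /= val_insubd hs eqxx. Qed.

Lemma mkf_tag (S : schema) (r : S) (s : seq nat) : tag (mkf r s) = r.
Proof. by []. Qed.

Lemma fact_eqP (S : schema) (f g : fact S) :
  f = g <-> tag f = tag g /\ val (tagged f) = val (tagged g).
Proof.
split=> [-> //|]; case: f => r t; case: g => r' t' /= [er]; subst r'.
by move=> /val_inj ->.
Qed.

Lemma mkfE (S : schema) (f : fact S) : f = mkf (tag f) (val (tagged f)).
Proof. by apply/fact_eqP; rewrite mkf_val // size_tuple. Qed.

Lemma mkf_inj (S : schema) (r r' : S) (s s' : seq nat) :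
  size s = ar r -> size s' = ar r' -> mkf r s = mkf r' s' -> r = r' /\ s = s'.
Proof.
move=> h h' /fact_eqP [/= er ev]; split=> //.
by move: ev; rewrite (mkf_val h) (mkf_val h').
Qed.

Lemma mem_mkf (S : schema) (r : S) (s : seq nat) u :
  size s = ar r -> (u \in tagged (mkf r s)) = (u \in s).
Proof.
move=> h; transitivity (u \in val (tagged (mkf r s))); first by [].
by rewrite mkf_val.
Qed.

Fixpoint allseqs (n : nat) (L : seq nat) : seq (seq nat) :=
  if n is n'.+1 then [seq x :: s | x <- L, s <- allseqs n' L] else [:: [::]].

Lemma allseqsP n L s : size s = n -> all (mem L) s -> s \in allseqs n L.
Proof.
elim: s n => [|x s IH] [|n] //= [hs] /andP[xL sL].
by apply/allpairsP; exists (x, s) => /=; rewrite xL IH.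
Qed.

Definition view_cond (S T : schema) (Phi : T -> cq S) (D : inst S) (f : fact T) :=
  (forall u, u \in tagged f -> adom_sem D (Phi (tag f)) u) /\
  sat D (adom_sem D (Phi (tag f))) (tuple_asg (tagged f)) (Phi (tag f)).

Lemma view_exists (S T : schema) (Phi : T -> cq S) :
  exists V' : inst S -> inst T, forall D f, f \in V' D <-> view_cond Phi D f.
Proof.
suff H : forall D, exists X : inst T, forall f, f \in X <-> view_cond Phi D f.
  by have [V' HV] := choice H; exists V'.
move=> D.
pose L := flatten [seq tval (tagged f) | f : fact S <- enum_fset D] ++
          flatten [seq consts (Phi R) | R <- enum T].
pose cand := [fset mkf R s | R in {: T}, s in allseqs (ar R) L].
exists [fset f in cand | `[< view_cond Phi D f >]] => f.
rewrite in_fset /= inE; split; first by case/andP=> _ /asboolP.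
move=> hc; rewrite (asboolT hc) andbT.
rewrite [f]mkfE; apply/imfset2P; exists (tag f) => //.
exists (val (tagged f)) => //.
apply: allseqsP; first by rewrite size_tuple.
apply/allP=> u hu; case: hc => hd _; case: (hd u hu) => [[g gD ug]|uc].
  change (u \in L); rewrite mem_cat; apply/orP; left; apply/flattenP.
  by exists (val (tagged g)) => //; apply/mapP; exists g.
change (u \in L); rewrite mem_cat; apply/orP; right; apply/flattenP.
by exists (consts (Phi (tag f))) => //; apply/mapP; exists (tag f); rewrite ?mem_enum.
Qed.
Lemma sum_pred1_uniq (R : realType) (I : eqType) (r : seq I) (i : I) (F : I -> R) :
  uniq r -> i \in r -> \sum_(j <- r | j == i) F j = F i.
Proof.
move=> ur ir; rewrite (big_rem i) //= eqxx big1_seq ?addr0 // => j /andP[/eqP -> ].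
by rewrite (rem_filter _ ur) mem_filter /= eqxx.
Qed.
Lemma prE_image (R : realType) (X Y : choiceType) (e : X -> Y) (P : fpdb R X)
  (E : pred Y) : prE (image_pdb e P) E = prE P (fun x => E (e x)).
Proof.
rewrite /prE /=.
transitivity (\sum_(y <- [fset e x | x in worlds P])
   \sum_(x <- worlds P | e x == y) (if E y then mass P x else 0)).
  rewrite big_mkcond /=; apply: eq_bigr => y _; rewrite /prE.
  case: (E y) => //; by rewrite big1.
apply: etrans; first (apply: eq_bigr => y _; rewrite big_mkcond; reflexivity).
rewrite exchange_big /= [RHS]big_mkcond big_seq [RHS]big_seq.
apply: eq_bigr => x xW.
rewrite -big_mkcond (eq_bigl (fun y => y == e x)); last by move=> y; rewrite eq_sym.
rewrite sum_pred1_uniq ?fset_uniq ?in_imfset //.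
Qed.

Section Construction.
Variables (R : realType) (S T : schema) (I : fpdb R (inst S)) (V : inst S -> inst T).

Definition FF : {fset fact S} := [fset f | W in worlds I, f in W].
Definition FT : finType := fset_sub_type FF.
Definition relT : finType := (T + (FT + FT))%type.
Definition arT (r : relT) : nat :=
  match r with inl Rt => (ar Rt).+1 | inr (inl _) => 2 | inr (inr _) => 1 end.
Lemma relT_ne : (0 < #|{: relT}|)%N.
Proof. by rewrite card_sum ltn_addr // (rel_nonempty T). Qed.
Definition S' : schema := @Schema relT arT relT_ne.

Definition ws : seq (inst S) := enum_fset (worlds I).
Definition widx (W : inst S) : nat := index W ws.
Definition mkSel (g : fact T) (w : nat) : fact S' :=
  mkf (S:=S') (inl (tag g)) (rcons (tval (tagged g)) w).
Definition mkB (s : FT) (w z : nat) : fact S' := mkf (S:=S') (inr (inl s)) [:: w; z].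
Definition mkA (s : FT) (z : nat) : fact S' := mkf (S:=S') (inr (inr s)) [:: z].

Definition K : {fset fact S'} :=
  [fset mkSel g (widx W) | W in worlds I, g in V W] `|`
  [fset mkB s (widx W) 1 | W in worlds I, s in {: FT}] `|`
  [fset mkB s (widx W) 0 | W in worlds I, s in {: FT} & val s \notin W] `|`
  [fset mkA s 0 | s in {: FT}].
Definition emb (D : inst S) : inst S' :=
  [fset mkA s 1 | s in {: FT} & val s \in D] `|` K.

Lemma mkA_inj s z s' z' : mkA s z = mkA s' z' -> s = s' /\ z = z'.
Proof. by move/mkf_inj => /(_ erefl erefl) [[->] [->]]. Qed.
Lemma mkB_inj s w z s' w' z' : mkB s w z = mkB s' w' z' -> [/\ s = s', w = w' & z = z'].
Proof. by move/mkf_inj => /(_ erefl erefl) [[->] [-> ->]]. Qed.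
Lemma mkSel_inj g w g' w' : mkSel g w = mkSel g' w' -> g = g' /\ w = w'.
Proof.
move/mkf_inj; rewrite !size_rcons !size_tuple => /(_ erefl erefl) [[e]] /rcons_inj [e1 ->].
by split => //; apply/fact_eqP.
Qed.
Lemma mkA_B s z s' w z' : mkA s z <> mkB s' w z'.
Proof. by move/(congr1 tag). Qed.
Lemma mkA_Sel s z g w : mkA s z <> mkSel g w.
Proof. by move/(congr1 tag). Qed.
Lemma mkB_Sel s z w' g w : mkB s w' z <> mkSel g w.
Proof. by move/(congr1 tag). Qed.


Lemma in_K_A s z : (mkA s z \in K) = (z == 0%N).
Proof.
rewrite !in_fsetU; apply/idP/idP.
  case/orP => [/orP [/orP [|]|]|].
  - by case/imfset2P => W _ [g _ /mkA_Sel].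
  - by case/imfset2P => W _ [s' _ /mkA_B].
  - by case/imfset2P => W _ [s' _ /mkA_B].
  - by case/imfsetP => s' _ /mkA_inj [_ ->].
by move/eqP => ->; apply/orP; right; apply/imfsetP; exists s.
Qed.

Lemma in_emb_A D s z :
  (mkA s z \in emb D) = (z == 0%N) || ((z == 1%N) && (val s \in D)).
Proof.
rewrite /emb in_fsetU in_K_A orbC; congr (_ || _); apply/idP/idP.
  by case/imfsetP => s' /=; rewrite inE => hs /mkA_inj [-> ->]; rewrite eqxx.
by case/andP => /eqP -> hs; apply/imfsetP; exists s => //=.
Qed.

Lemma in_emb_B D s w z :
  mkB s w z \in emb D <->
  exists2 W, W \in worlds I & w = widx W /\ (z = 1%N \/ (z = 0%N /\ val s \notin W)).
Proof.
rewrite /emb !in_fsetU; split.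
  case/orP => [|/orP [/orP [/orP [|]|]|]].
  - by case/imfsetP => s' _ /esym /mkA_B.
  - by case/imfset2P => W _ [g _ /mkB_Sel].
  - case/imfset2P => W hW [s' _ /mkB_inj [_ -> ->]].
    by exists W => //; split => //; left.
  - case/imfset2P => W hW [s' hs /mkB_inj [-> -> ->]]; rewrite inE in hs.
    by exists W => //; split => //; right.
  - by case/imfsetP => s' _ /esym /mkA_B.
case=> W hW [-> [->|[-> hs]]]; apply/orP; right; apply/orP; left; apply/orP.
  by left; apply/orP; right; apply/imfset2P; exists W => //; exists s.
by right; apply/imfset2P; exists W => //; exists s => //=.
Qed.

Lemma in_emb_Sel D f w :
  mkSel f w \in emb D <-> exists2 W, W \in worlds I & f \in V W /\ w = widx W.
Proof.
rewrite /emb !in_fsetU; split.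
  case/orP => [|/orP [/orP [/orP [|]|]|]].
  - by case/imfsetP => s' _ /esym /mkA_Sel.
  - by case/imfset2P => W hW [g hg /mkSel_inj [-> ->]]; exists W.
  - by case/imfset2P => W _ [s' _ /esym /mkB_Sel].
  - by case/imfset2P => W _ [s' _ /esym /mkB_Sel].
  - by case/imfsetP => s' _ /esym /mkA_Sel.
case=> W hW [hf ->]; apply/orP; right; do 3 (apply/orP; left).
by apply/imfset2P; exists W => //; exists f.
Qed.

Lemma in_emb_gen D f :
  (f \in emb D) = (f \in K) || [exists s : FT, (f == mkA s 1) && (val s \in D)].
Proof.
rewrite /emb in_fsetU orbC; congr (_ || _); apply/imfsetP/existsP.
  by case=> s /= hs ->; exists s; rewrite eqxx.
by case=> s /andP [/eqP -> hs]; exists s.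
Qed.


Definition atom (r : S') (ts : seq term) : cq S' :=
  @CAtom S' r (insubd (nseq_tuple (ar r) (TConst 0)) ts).
Definition conjF (n : nat) (s : FT) : cq S' :=
  CEx n.+1 (CAnd (atom (inr (inl s)) [:: TVar n; TVar n.+1])
                 (atom (inr (inr s)) [:: TVar n.+1])).
Definition ctrue : cq S' := CEq (TConst 0) (TConst 0).
Definition Phi (Rt : T) : cq S' :=
  CEx (ar Rt) (CAnd (atom (inl Rt) (rcons (map TVar (iota 0 (ar Rt))) (TVar (ar Rt))))
              (foldr (@CAnd S') ctrue (map (conjF (ar Rt)) (enum FT)))).

Lemma sat_atom D dom nu r ts : size ts = ar r ->
  sat D dom nu (atom r ts) = (mkf r (map (eval_term nu) ts) \in D).
Proof.
move=> hs /=; congr (_ \in D); apply/fact_eqP; split => //=.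
by rewrite !val_insubd size_map hs eqxx.
Qed.

Lemma sat_foldr D dom nu n (l : seq FT) :
  sat D dom nu (foldr (@CAnd S') ctrue (map (conjF n) l)) <->
  (forall s, s \in l -> sat D dom nu (conjF n s)).
Proof.
elim: l => [|s l IH] /=; first by split.
rewrite IH; split=> [[h1 h2] s'|h]; first by rewrite inE => /orP [/eqP ->|/h2].
by split=> [|s' hs']; apply: h; rewrite inE ?eqxx ?hs' ?orbT.
Qed.

Lemma satEx D dom nu x (phi : cq S') :
  sat D dom nu (CEx x phi) = exists2 a, dom a & sat D dom (upd nu x a) phi.
Proof. by []. Qed.
Lemma satAnd D dom nu (phi psi : cq S') :
  sat D dom nu (CAnd phi psi) = (sat D dom nu phi /\ sat D dom nu psi).
Proof. by []. Qed.

Lemma sat_conjF D dom nu n s :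
  sat D dom nu (conjF n s) <->
  exists2 z, dom z & (mkB s (nu n) z \in D /\ mkA s z \in D).
Proof.
have hn : (n == n.+1) = false by rewrite ltn_eqF.
rewrite /conjF satEx; split; case=> z hz.
  rewrite satAnd !sat_atom //= /upd /= hn eqxx => -[h1 h2]; exists z => //.
move=> [h1 h2]; exists z => //; rewrite satAnd !sat_atom //= /upd /= hn eqxx; by split.
Qed.


Lemma map_eval_sel (Rt : T) (a : (ar Rt).-tuple nat) w :
  map (eval_term (upd (tuple_asg a) (ar Rt) w))
      (rcons (map TVar (iota 0 (ar Rt))) (TVar (ar Rt))) = rcons (tval a) w.
Proof.
rewrite map_rcons /= /upd eqxx -map_comp; congr rcons.
rewrite -[in RHS](mkseq_nth 0%N a) size_tuple /mkseq; apply/eq_in_map => i.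
by rewrite mem_iota => /andP[_ hi] /=; rewrite ltn_eqF.
Qed.

Lemma sat_Phi D dom (f : fact T) :
  sat D dom (tuple_asg (tagged f)) (Phi (tag f)) <->
  exists2 w, dom w & (mkSel f w \in D /\
    forall s : FT, exists2 z, dom z & (mkB s w z \in D /\ mkA s z \in D)).
Proof.
have hsz : size (rcons (map TVar (iota 0 (ar (tag f)))) (TVar (ar (tag f)))) =
  @ar S' (inl (tag f)) by rewrite size_rcons size_map size_iota.
rewrite /Phi satEx; split; case=> w hw.
  rewrite satAnd sat_atom // map_eval_sel sat_foldr => -[h1 h2].
  exists w => //; split => // s; have := h2 s (mem_enum _ _).
  by rewrite sat_conjF /upd eqxx.
move=> [h1 h2]; exists w => //; rewrite satAnd sat_atom // map_eval_sel sat_foldr.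
split => // s _; rewrite sat_conjF /upd eqxx; exact: h2.
Qed.


Lemma adom_mkf (D : inst S') (r : S') s u :
  mkf r s \in D -> size s = ar r -> u \in s -> adom D u.
Proof. by move=> hD hs hu; exists (mkf r s) => //; rewrite mem_mkf. Qed.

Lemma V'_emb (V' : inst S' -> inst T) :
  (forall D f, f \in V' D <-> view_cond Phi D f) -> monotone_view V ->
  forall D0, D0 \in worlds I -> V' (emb D0) = V D0.
Proof.
move=> HV Hmono D0 hD0; apply/fsetP => f; apply/idP/idP.
  move/HV => [_ /sat_Phi [w _ [/in_emb_Sel [W hW [hf ->]] hall]]].
  apply: (fsubsetP (Hmono W D0 _)) hf; apply/fsubsetP => x xW.
  have xF : x \in FF by apply/imfset2P; exists W => //; exists x.
  have [z _ [/in_emb_B [W' hW' [eW hz]]]] := hall [` xF].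
  have eWW : W = W' by apply: (index_inj W) eW; rewrite /ws.
  subst W'; rewrite in_emb_A => /orP [/eqP z0|/andP [_ //]].
  by case: hz => [|[_]]; [rewrite z0 | rewrite /= xW].
move=> hf.
have hsel : mkSel f (widx D0) \in emb D0 by apply/in_emb_Sel; exists D0.
have hsz : size (rcons (tval (tagged f)) (widx D0)) = ar (inl (tag f) : S')
  by rewrite size_rcons size_tuple.
apply/HV; split.
  move=> u hu; left; apply: (adom_mkf hsel hsz).
  by rewrite mem_rcons inE hu orbT.
apply/sat_Phi; exists (widx D0).
  by left; apply: (adom_mkf hsel hsz); rewrite mem_rcons inE eqxx.
split => // s; case hs: (val s \in D0).
  have hB : mkB s (widx D0) 1 \in emb D0 by apply/in_emb_B; exists D0 => //; split => //; left.
  exists 1%N; first by left; apply: (adom_mkf hB) => //; rewrite !inE eqxx orbT.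
  by split => //; rewrite in_emb_A hs eqxx orbT.
have hA : mkA s 0 \in emb D0 by rewrite in_emb_A.
exists 0%N; first by left; apply: (adom_mkf hA) => //; rewrite !inE.
split => //; apply/in_emb_B; exists D0 => //; split => //; right; by rewrite hs.
Qed.


Lemma fv_atom (r : S') ts : size ts = ar r -> fv (atom r ts) = flatten (map term_vars ts).
Proof. by move=> hs /=; rewrite val_insubd hs eqxx. Qed.
Lemma rels_atom (r : S') ts : rels (atom r ts) = [:: r].
Proof. by []. Qed.

Lemma mem_rels_foldr n l (x : S') :
  x \in rels (foldr (@CAnd S') ctrue (map (conjF n) l)) =
  (match x with inl _ => false | inr (inl s) => s \in l | inr (inr s) => s \in l end).
Proof.
elim: l => [|s l IH] /=; first by case: (x) => [?|[?|?]].
rewrite !inE IH; case: (x) => [?|[?|?]] //=.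
Qed.

Lemma uniq_rels_foldr n l : uniq l -> uniq (rels (foldr (@CAnd S') ctrue (map (conjF n) l))).
Proof.
elim: l => [|s l IH] //= /andP [sl ul].
by rewrite IH // andbT !inE /= !mem_rels_foldr sl /=.
Qed.

Lemma fv_foldr n l x : x \in fv (foldr (@CAnd S') ctrue (map (conjF n) l)) -> x = n.
Proof.
elim: l => [|s l IH] //=; rewrite mem_cat => /orP [|/IH //].
rewrite mem_filter !val_insubd /= !inE => /andP [hx].
by case/orP => [/eqP //|]; rewrite (negbTE hx) orbF.
Qed.

Lemma Phi_sjf (Rt : T) : sjfcq_formula (ar Rt) (Phi Rt).
Proof.
split.
  by rewrite /self_join_free /= mem_rels_foldr uniq_rels_foldr ?enum_uniq.
move=> x /=; rewrite mem_filter => /andP [hx]; rewrite mem_cat => /orP [|/fv_foldr].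
  rewrite val_insubd size_rcons size_map size_iota eqxx.
  rewrite map_rcons flatten_rcons mem_cat => /orP [|]; last by rewrite inE (negbTE hx).
  rewrite -map_comp; move/flattenP => [y /mapP [i hi ->]]; rewrite /= inE => /eqP ->.
  by move: hi; rewrite mem_iota.
by move=> e; move: hx; rewrite /= e eqxx.
Qed.


Lemma prE_ext (X : choiceType) (P : fpdb R X) (E E' : pred X) :
  (forall x, x \in worlds P -> E x = E' x) -> prE P E = prE P E'.
Proof.
move=> h; rewrite /prE big_seq_cond [RHS]big_seq_cond; apply: eq_bigl => x.
by case hx: (x \in worlds P) => //=; rewrite h.
Qed.

Lemma prE_false (X : choiceType) (P : fpdb R X) : prE P (fun _ => false) = 0.
Proof. by rewrite /prE big_mkcond big1. Qed.

Lemma not_emb f : ~~ ((f \in K) || [exists s : FT, f == mkA s 1]) ->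
  forall D, (f \in emb D) = false.
Proof.
rewrite negb_or => /andP [hK hA] D; rewrite in_emb_gen (negbTE hK) /=.
apply/negbTE/existsP => -[s /andP [e _]].
by apply: (negP hA); apply/existsP; exists s.
Qed.

Lemma TI_emb : TI_fin I -> TI_fin (image_pdb emb I).
Proof.
move=> [[hne [hpos hsum]] hti]; split.
  split; first by move: hne; rewrite !cardfs_gt0 => /fset0Pn [W hW];
    apply/fset0Pn; exists (emb W); apply: in_imfset.
  split.
    move=> D' _ /=; rewrite /prE big_seq_cond; apply: sumr_ge0 => i /andP [hi _].
    exact: hpos.
  by have := prE_image emb I (fun _ => true); rewrite /prE => ->.
move=> F'; rewrite prE_image.
apply: etrans; last by (apply: eq_bigr => f _; rewrite prE_image; reflexivity).
have [hall|/allPn [f0 hf0 hbad]] :=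
  boolP (all (fun f => (f \in K) || [exists s : FT, f == mkA s 1]) F'); last first.
  have h0 : prE I (fun D => f0 \in emb D) = 0.
    by rewrite (prE_ext (E' := fun _ => false)) ?prE_false // => D _; rewrite not_emb.
  rewrite (big_fsetD1 f0) //= h0 mul0r.
  rewrite (prE_ext (E' := fun _ => false)) ?prE_false // => D _.
  by apply/negbTE/negP => /fsubsetP /(_ f0 hf0); rewrite not_emb.
pose G : {fset fact S} := [fset val s | s in {: FT} & mkA s 1 \in F'].
rewrite (prE_ext (E' := fun D => G `<=` D)); last first.
  move=> D _; apply/idP/idP.
    move/fsubsetP => h; apply/fsubsetP => x /imfsetP [s hs ->].
    by rewrite inE in hs; have := h _ hs; rewrite in_emb_A.
  move/fsubsetP => h; apply/fsubsetP => f hf; rewrite in_emb_gen.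
  case/orP: (allP hall f hf) => [-> //|/existsP [s /eqP e]].
  apply/orP; right; apply/existsP; exists s; rewrite e eqxx /=.
  by apply: h; apply/imfsetP; exists s => //; rewrite inE -e.
rewrite hti /G big_imfset /=; last by move=> x y _ _; apply: val_inj.
rewrite (big_fsetID _ (mem K)) /= big1_fset ?mul1r; last first.
  move=> f; rewrite inE /= => /andP [_ hK] _.
  by rewrite (prE_ext (E' := fun _ => true)) ?hsum // => D _; rewrite in_emb_gen hK.
have -> : [fset x in F' | x \notin K] = [fset mkA s 1 | s in {: FT} & mkA s 1 \in F'].
  apply/fsetP => f; rewrite inE /=; apply/andP/imfsetP.
    case=> hf hK; case/orP: (allP hall f hf) => [hK'|/existsP [s /eqP e]].
      by rewrite hK' in hK.
    by exists s => //; rewrite inE -e.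
  by case=> s; rewrite inE => hs ->; rewrite in_K_A.
rewrite big_imfset /=; last by move=> x y _ _ /mkA_inj [].
apply: eq_bigr => s _; apply: prE_ext => D _; by rewrite in_emb_A.
Qed.

End Construction.

Theorem proposition7p3 (R : realType) (S T : schema) (I : fpdb R (inst S))
  (V : inst S -> inst T) :
  TI_fin I -> monotone_view V -> in_sjfCQ_TIfin (image_pdb V I).
Proof.
move=> hTI hmono.
have [V' HV] := view_exists (@Phi R S T I).
exists (@S' R S T I), (image_pdb (@emb R S T I V) I), V'.
split; first exact: TI_emb.
split.
  exists (@Phi R S T I); split => [Rt|D f]; first exact: Phi_sjf.
  exact: HV.
move=> J; rewrite /pr !prE_image; apply: prE_ext => D hD /=.
by rewrite (V'_emb HV hmono hD).
Qed.
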